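(* Let $\mathbb S=\bigwedge(\bar\theta_1,\bar\theta_2)$ be the simple $\mathcal C$-module, on which $\bar\theta_a$ acts by (left exterior) multiplication and $\theta_a$ acts as the odd derivation with $\theta_a(\bar\theta_b)=\delta_{ab}$, $\theta_a(1)=0$. Restricted to $\tilde W\subset\mathcal C^\times$, $\mathbb S$ is an irreducible spin representation of $\tilde W$ isomorphic to $U(1,1)$.
   Context: Fix integers $m_1,m_2\ge2$ and set $\zeta_a=e^{i\pi/m_a}$. Let $x_1,\dots,x_4$ be the standard orthonormal basis of $\mathbb R^4$ (complexified to $V=\mathbb C^4$). Let $\mathcal C$ be the complex Clifford algebra generated by $e_1,\dots,e_4$ with $e_je_k+e_ke_j=2\delta_{jk}$, and $\gamma:V\to\mathcal C$ the linear map with $\gamma(x_j)=e_j$. Put $\theta_a=\frac12(e_{2a-1}+ie_{2a})$ and $\bar\theta_a=\frac12(e_{2a-1}-ie_{2a})$ for $a=1,2$. Let $\alpha_p=(\sin(p\pi/m_1),-\cos(p\pi/m_1),0,0)$ ($p=1,\dots,2m_1$), $\beta_q=(0,0,\sin(q\pi/m_2),-\cos(q\pi/m_2))$ ($q=1,\dots,2m_2$), and let $\tilde W\subset\mathcal C^\times$ be the group generated by all $\gamma(\alpha_p),\gamma(\beta_q)$ (the positive double cover of $W=D_{2m_1}\times D_{2m_2}$); it contains $z:=-1$. A representation of $\tilde W$ is spin if $z$ acts by $-1$. Set $\tilde f_1=\gamma(\alpha_{m_1})$, $\tilde f_2=\gamma(\beta_{m_2})$, $\tilde r_1=z\gamma(\alpha_{m_1})\gamma(\alpha_1)$,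 $\tilde r_2=z\gamma(\beta_{m_2})\gamma(\beta_1)$; these together with $z$ generate $\tilde W$. $U(1,1)$ denotes the four-dimensional spin representation of $\tilde W$ with basis $u_1,u_2,u_3,u_4$ on which, in matrix form with respect to this basis, $\tilde f_1=\begin{pmatrix}0&1&0&0\\1&0&0&0\\0&0&0&1\\0&0&1&0\end{pmatrix}$, $\tilde f_2=\begin{pmatrix}0&0&1&0\\0&0&0&-1\\1&0&0&0\\0&-1&0&0\end{pmatrix}$, $\tilde r_1=\mathrm{diag}(\zeta_1,\zeta_1^{-1},\zeta_1,\zeta_1^{-1})$, $\tilde r_2=\mathrm{diag}(\zeta_2,\zeta_2,\zeta_2^{-1},\zeta_2^{-1})$, and $z=-1$. *)

(* Defs.v *)
From HB Require Import structures.
From mathcomp Require Import all_boot all_order all_algebra all_field.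
Set Implicit Arguments. Unset Strict Implicit. Unset Printing Implicit Defensive.
Import Order.TTheory GRing.Theory Num.Theory.
Local Open Scope ring_scope.

(* zeta m = e^{i pi / m}: the m-th root of -1 with minimal nonnegative argument *)
Definition zeta (m : nat) : algC := m.-root (-1).

(* cos(p pi / m) = Re (zeta^p), sin(p pi / m) = Im (zeta^p) *)
Definition cosm (m p : nat) : algC := 'Re (zeta m ^+ p).
Definition sinm (m p : nat) : algC := 'Im (zeta m ^+ p).

Definition mx4 (l : seq (seq algC)) : 'M[algC]_4 :=
  \matrix_(i < 4, j < 4) nth 0 (nth [::] l i) j.

(* The module S = /\(tb1, tb2), as column vectors in the basis
   index 0 = 1, 1 = tb1, 2 = tb2, 3 = tb1 tb2.
   Operators are matrices A acting on column vectors: column j of A is the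
   image of the j-th basis vector. *)

(* left exterior multiplication by tb1: 1 |-> tb1, tb2 |-> tb1 tb2 *)
Definition thb1 : 'M[algC]_4 :=
  mx4 [:: [:: 0; 0; 0; 0]; [:: 1; 0; 0; 0]; [:: 0; 0; 0; 0]; [:: 0; 0; 1; 0]].
(* left exterior multiplication by tb2: 1 |-> tb2, tb1 |-> tb2 tb1 = - tb1 tb2 *)
Definition thb2 : 'M[algC]_4 :=
  mx4 [:: [:: 0; 0; 0; 0]; [:: 0; 0; 0; 0]; [:: 1; 0; 0; 0]; [:: 0; -1; 0; 0]].
(* odd derivation theta1 with theta1(tb_b) = delta_1b, theta1(1) = 0:
   tb1 |-> 1, tb1 tb2 |-> tb2 *)
Definition th1 : 'M[algC]_4 :=
  mx4 [:: [:: 0; 1; 0; 0]; [:: 0; 0; 0; 0]; [:: 0; 0; 0; 1]; [:: 0; 0; 0; 0]].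
(* odd derivation theta2: tb2 |-> 1, tb1 tb2 |-> - tb1 *)
Definition th2 : 'M[algC]_4 :=
  mx4 [:: [:: 0; 0; 1; 0]; [:: 0; 0; 0; -1]; [:: 0; 0; 0; 0]; [:: 0; 0; 0; 0]].

(* action of e_1..e_4 on S:  e_{2a-1} = theta_a + thetabar_a,
   e_{2a} = i (thetabar_a - theta_a)  (inverting theta_a = (e_{2a-1} + i e_{2a})/2) *)
Definition Eop (j : 'I_4) : 'M[algC]_4 :=
  match val j with
  | 0 => th1 + thb1
  | 1 => 'i *: (thb1 - th1)
  | 2 => th2 + thb2
  | _ => 'i *: (thb2 - th2)
  end.

Definition gammaS (v : 'rV[algC]_4) : 'M[algC]_4 := \sum_(j < 4) v 0 j *: Eop j.

Definition vec4 (a b c d : algC) : 'rV[algC]_4 :=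
  \row_(j < 4) nth 0 [:: a; b; c; d] j.

Definition alpha (m1 p : nat) : 'rV[algC]_4 := vec4 (sinm m1 p) (- cosm m1 p) 0 0.
Definition beta (m2 q : nat) : 'rV[algC]_4 := vec4 0 0 (sinm m2 q) (- cosm m2 q).

(* Image on S of the group tW generated by the gamma(alpha_p), gamma(beta_q) *)
Inductive in_tW (m1 m2 : nat) : 'M[algC]_4 -> Prop :=
  | tW_alpha p : (1 <= p <= 2 * m1)%N -> in_tW m1 m2 (gammaS (alpha m1 p))
  | tW_beta q : (1 <= q <= 2 * m2)%N -> in_tW m1 m2 (gammaS (beta m2 q))
  | tW_one : in_tW m1 m2 1%:M
  | tW_mul g h : in_tW m1 m2 g -> in_tW m1 m2 h -> in_tW m1 m2 (g *m h)
  | tW_inv g : in_tW m1 m2 g -> in_tW m1 m2 (invmx g).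

Definition zS : 'M[algC]_4 := - 1%:M.   (* z = -1 in C *)
Definition f1S m1 := gammaS (alpha m1 m1).
Definition f2S m2 := gammaS (beta m2 m2).
Definition r1S m1 := zS *m gammaS (alpha m1 m1) *m gammaS (alpha m1 1).
Definition r2S m2 := zS *m gammaS (beta m2 m2) *m gammaS (beta m2 1).

Definition Uf1 : 'M[algC]_4 :=
  mx4 [:: [:: 0; 1; 0; 0]; [:: 1; 0; 0; 0]; [:: 0; 0; 0; 1]; [:: 0; 0; 1; 0]].
Definition Uf2 : 'M[algC]_4 :=
  mx4 [:: [:: 0; 0; 1; 0]; [:: 0; 0; 0; -1]; [:: 1; 0; 0; 0]; [:: 0; -1; 0; 0]].
Definition Ur1 (m1 : nat) : 'M[algC]_4 :=
  let z := zeta m1 in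
  mx4 [:: [:: z; 0; 0; 0]; [:: 0; z^-1; 0; 0]; [:: 0; 0; z; 0]; [:: 0; 0; 0; z^-1]].
Definition Ur2 (m2 : nat) : 'M[algC]_4 :=
  let z := zeta m2 in
  mx4 [:: [:: z; 0; 0; 0]; [:: 0; z; 0; 0]; [:: 0; 0; z^-1; 0]; [:: 0; 0; 0; z^-1]].
Definition Uz : 'M[algC]_4 := - 1%:M.

Definition clifford_relations : Prop :=
  forall j k : 'I_4, Eop j *m Eop k + Eop k *m Eop j = ((j == k)%:R *+ 2)%:M.

(* subspaces given as row spaces of U (rows = transposed column vectors);
   x |-> g x preserves the subspace iff U *m g^T <= U *)
Definition irreducible_on_S (m1 m2 : nat) : Prop :=
  forall U : 'M[algC]_4,
    (forall g, in_tW m1 m2 g -> (U *m g^T <= U)%MS) ->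
    \rank U = 0%N \/ \rank U = 4%N.

Definition spin_on_S (m1 m2 : nat) : Prop := in_tW m1 m2 zS /\ zS = - 1%:M.

Definition iso_U11 (m1 m2 : nat) : Prop :=
  exists P : 'M[algC]_4, P \in unitmx /\
    f1S m1 *m P = P *m Uf1 /\ f2S m2 *m P = P *m Uf2 /\
    r1S m1 *m P = P *m Ur1 m1 /\ r2S m2 *m P = P *m Ur2 m2 /\
    zS *m P = P *m Uz.

(* Main.v *)
Require Import Defs.
From mathcomp Require Import all_boot all_order all_algebra all_field.
From mathcomp Require Import ring.
Set Implicit Arguments. Unset Strict Implicit. Unset Printing Implicit Defensive.
Import Order.TTheory GRing.Theory Num.Theory.
Local Open Scope ring_scope.

Lemma mul4 (a00 a01 a02 a03 a10 a11 a12 a13 a20 a21 a22 a23 a30 a31 a32 a33 b00 b01 b02 b03 b10 b11 b12 b13 b20 b21 b22 b23 b30 b31 b32 b33 : algC) :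
  mx4 [:: [:: a00; a01; a02; a03]; [:: a10; a11; a12; a13]; [:: a20; a21; a22; a23]; [:: a30; a31; a32; a33]] *m mx4 [:: [:: b00; b01; b02; b03]; [:: b10; b11; b12; b13]; [:: b20; b21; b22; b23]; [:: b30; b31; b32; b33]] =
  mx4 [:: [:: a00 * b00 + a01 * b10 + a02 * b20 + a03 * b30; a00 * b01 + a01 * b11 + a02 * b21 + a03 * b31; a00 * b02 + a01 * b12 + a02 * b22 + a03 * b32; a00 * b03 + a01 * b13 + a02 * b23 + a03 * b33]; [:: a10 * b00 + a11 * b10 + a12 * b20 + a13 * b30; a10 * b01 + a11 * b11 + a12 * b21 + a13 * b31; a10 * b02 + a11 * b12 + a12 * b22 + a13 * b32; a10 * b03 + a11 * b13 + a12 * b23 + a13 * b33]; [:: a20 * b00 + a21 * b10 + a22 * b20 + a23 * b30; a20 * b01 + a21 * b11 + a22 * b21 + a23 * b31; a20 * b02 + a21 * b12 + a22 * b22 + a23 * b32; a20 * b03 + a21 * b13 + a22 * b23 + a23 * b33]; [:: a30 * b00 + a31 * b10 + a32 * b20 + a33 * b30; a30 * b01 + a31 * b11 + a32 * b21 + a33 * b31; a30 * b02 + a31 * b12 + a32 * b22 + a33 * b32; a30 * b03 + a31 * b13 + a32 * b23 + a33 * b33]].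
Proof.
apply/matrixP => [[[|[|[|[|?]]]] ?] [[|[|[|[|?]]]] ?]] //;
rewrite !mxE !big_ord_recr big_ord0 /= !mxE /= add0r //.
Qed.

Lemma eq4 (a00 a01 a02 a03 a10 a11 a12 a13 a20 a21 a22 a23 a30 a31 a32 a33 b00 b01 b02 b03 b10 b11 b12 b13 b20 b21 b22 b23 b30 b31 b32 b33 : algC) :
  a00 = b00 -> a01 = b01 -> a02 = b02 -> a03 = b03 -> a10 = b10 -> a11 = b11 -> a12 = b12 -> a13 = b13 -> a20 = b20 -> a21 = b21 -> a22 = b22 -> a23 = b23 -> a30 = b30 -> a31 = b31 -> a32 = b32 -> a33 = b33 ->
  mx4 [:: [:: a00; a01; a02; a03]; [:: a10; a11; a12; a13]; [:: a20; a21; a22; a23]; [:: a30; a31; a32; a33]] = mx4 [:: [:: b00; b01; b02; b03]; [:: b10; b11; b12; b13]; [:: b20; b21; b22; b23]; [:: b30; b31; b32; b33]].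
Proof. by move=> -> -> -> -> -> -> -> -> -> -> -> -> -> -> -> ->. Qed.

Lemma sc4 (c : algC) : c%:M = mx4 [:: [:: c;0;0;0];[::0;c;0;0];[::0;0;c;0];[::0;0;0;c]] :> 'M[algC]_4.
Proof. by apply/matrixP => [[[|[|[|[|?]]]] ?] [[|[|[|[|?]]]] ?]] //; rewrite !mxE. Qed.

Lemma opp4 (a00 a01 a02 a03 a10 a11 a12 a13 a20 a21 a22 a23 a30 a31 a32 a33 : algC) : - mx4 [:: [:: a00; a01; a02; a03]; [:: a10; a11; a12; a13]; [:: a20; a21; a22; a23]; [:: a30; a31; a32; a33]] = mx4 [:: [:: -a00; -a01; -a02; -a03]; [:: -a10; -a11; -a12; -a13]; [:: -a20; -a21; -a22; -a23]; [:: -a30; -a31; -a32; -a33]].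
Proof. by apply/matrixP => [[[|[|[|[|?]]]] ?] [[|[|[|[|?]]]] ?]] //; rewrite !mxE. Qed.

Lemma tr4 (a00 a01 a02 a03 a10 a11 a12 a13 a20 a21 a22 a23 a30 a31 a32 a33 : algC) : (mx4 [:: [:: a00; a01; a02; a03]; [:: a10; a11; a12; a13]; [:: a20; a21; a22; a23]; [:: a30; a31; a32; a33]])^T = mx4 [:: [:: a00; a10; a20; a30]; [:: a01; a11; a21; a31]; [:: a02; a12; a22; a32]; [:: a03; a13; a23; a33]].
Proof. by apply/matrixP => [[[|[|[|[|?]]]] ?] [[|[|[|[|?]]]] ?]] //; rewrite !mxE. Qed.

Lemma scl4 (c a00 a01 a02 a03 a10 a11 a12 a13 a20 a21 a22 a23 a30 a31 a32 a33 : algC) : c *: mx4 [:: [:: a00; a01; a02; a03]; [:: a10; a11; a12; a13]; [:: a20; a21; a22; a23]; [:: a30; a31; a32; a33]] = mx4 [:: [:: c * a00; c * a01; c * a02; c * a03]; [:: c * a10; c * a11; c * a12; c * a13]; [:: c * a20; c * a21; c * a22; c * a23]; [:: c * a30; c * a31; c * a32; c * a33]].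
Proof. by apply/matrixP => [[[|[|[|[|?]]]] ?] [[|[|[|[|?]]]] ?]] //; rewrite !mxE. Qed.

Lemma add4 (a00 a01 a02 a03 a10 a11 a12 a13 a20 a21 a22 a23 a30 a31 a32 a33 b00 b01 b02 b03 b10 b11 b12 b13 b20 b21 b22 b23 b30 b31 b32 b33 : algC) : mx4 [:: [:: a00; a01; a02; a03]; [:: a10; a11; a12; a13]; [:: a20; a21; a22; a23]; [:: a30; a31; a32; a33]] + mx4 [:: [:: b00; b01; b02; b03]; [:: b10; b11; b12; b13]; [:: b20; b21; b22; b23]; [:: b30; b31; b32; b33]] = mx4 [:: [:: a00 + b00; a01 + b01; a02 + b02; a03 + b03]; [:: a10 + b10; a11 + b11; a12 + b12; a13 + b13]; [:: a20 + b20; a21 + b21; a22 + b22; a23 + b23]; [:: a30 + b30; a31 + b31; a32 + b32; a33 + b33]].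
Proof. by apply/matrixP => [[[|[|[|[|?]]]] ?] [[|[|[|[|?]]]] ?]] //; rewrite !mxE. Qed.

Lemma hi : 'i * 'i = -1 :> algC. Proof. by rewrite -expr2 sqrCi. Qed.
Ltac csimp := rewrite ?(mul0r,mulr0,add0r,addr0,mul1r,mulr1,subr0,sub0r,mulrN,mulNr,opprK,oppr0,hi,mulr0n,mulr1n).
Ltac mxcomp := apply/matrixP => [[[|[|[|[|?]]]] ?] [[|[|[|[|?]]]] ?]] //;
rewrite ?mxE; repeat (progress rewrite ?big_ord_recr ?big_ord0 /= ?mxE /=); csimp; try done.

Definition I := 'i : algC.

Definition G (a b c d : algC) : 'M[algC]_4 :=
  mx4 [:: [:: 0; a - I * b; c - I * d; 0];
          [:: a + I * b; 0; 0; - c + I * d];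
          [:: c + I * d; 0; 0; a - I * b];
          [:: 0; - c - I * d; a + I * b; 0]].

Lemma gammaS_vec4 a b c d : gammaS (vec4 a b c d) = G a b c d.
Proof. (
rewrite /gammaS /G /I; apply/matrixP => [[[|[|[|[|?]]]] ?] [[|[|[|[|?]]]] ?]] //;
rewrite summxE !big_ord_recr big_ord0 /= !mxE /= /Eop /= ?mxE /=; csimp; try ring: hi).
Qed.

Lemma Eop_G j : Eop j = G (j == 0 :> nat)%:R (j == 1 :> nat)%:R (j == 2 :> nat)%:R (j == 3 :> nat)%:R.
Proof. (
case: j => [[|[|[|[|?]]]] ?] //; rewrite /G /Eop /I /=; mxcomp; ring: hi).
Qed.

Lemma G_anti a b c d a' b' c' d' :
  G a b c d *m G a' b' c' d' + G a' b' c' d' *m G a b c d =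
  (2 * (a*a' + b*b' + c*c' + d*d'))%:M.
Proof. (rewrite /G /I; mxcomp; ring: hi). Qed.

Lemma cliff : clifford_relations.
Proof. (
move=> j k; rewrite !Eop_G G_anti; case: j k => [[|[|[|[|?]]]] ?] // [[|[|[|[|?]]]] ?] //=;
congr (_%:M); rewrite /= ?mulr0n ?mulr1n; ring).
Qed.


Lemma zeta_m (m : nat) (hm : (0 < m)%N) : zeta m ^+ m = -1. Proof. by rewrite /zeta rootCK. Qed.
Lemma zeta_2m (m : nat) (hm : (0 < m)%N) : zeta m ^+ (2 * m) = 1.
Proof. by rewrite mulnC exprM (zeta_m hm) sqrrN expr1n. Qed.

Lemma alpha_m (m : nat) (hm : (0 < m)%N) : alpha m m = vec4 0 1 0 0.
Proof.
rewrite /alpha /cosm /sinm (zeta_m hm).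
have -> : 'Re (-1 : algC) = -1 by apply/Creal_ReP; rewrite rpredN rpred1.
have -> : 'Im (-1 : algC) = 0 by apply/Creal_ImP; rewrite rpredN rpred1.
by rewrite opprK.
Qed.
Lemma beta_m (m : nat) (hm : (0 < m)%N) : beta m m = vec4 0 0 0 1.
Proof.
rewrite /beta /cosm /sinm (zeta_m hm).
have -> : 'Re (-1 : algC) = -1 by apply/Creal_ReP; rewrite rpredN rpred1.
have -> : 'Im (-1 : algC) = 0 by apply/Creal_ImP; rewrite rpredN rpred1.
by rewrite opprK.
Qed.
Lemma alpha_2m (m : nat) (hm : (0 < m)%N) : alpha m (2 * m) = vec4 0 (-1) 0 0.
Proof.
rewrite /alpha /cosm /sinm (zeta_2m hm).
have -> : 'Re (1 : algC) = 1 by apply/Creal_ReP; rewrite rpred1.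
have -> : 'Im (1 : algC) = 0 by apply/Creal_ImP; rewrite rpred1.
by [].
Qed.
Lemma beta_2m (m : nat) (hm : (0 < m)%N) : beta m (2 * m) = vec4 0 0 0 (-1).
Proof.
rewrite /beta /cosm /sinm (zeta_2m hm).
have -> : 'Re (1 : algC) = 1 by apply/Creal_ReP; rewrite rpred1.
have -> : 'Im (1 : algC) = 0 by apply/Creal_ImP; rewrite rpred1.
by [].
Qed.
Lemma alpha_1 (m : nat) : alpha m 1 = vec4 ('Im (zeta m)) (- 'Re (zeta m)) 0 0.
Proof. by rewrite /alpha /cosm /sinm expr1. Qed.
Lemma beta_1 (m : nat) : beta m 1 = vec4 0 0 ('Im (zeta m)) (- 'Re (zeta m)).
Proof. by rewrite /beta /cosm /sinm expr1. Qed.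

Lemma zeta_inv (m : nat) (hm : (0 < m)%N) : (zeta m)^-1 = 'Re (zeta m) - I * 'Im (zeta m).
Proof.
rewrite invC_norm {1}/zeta norm_rootC normrN1 rootC1 // expr1n invr1 mul1r.
rewrite [X in X^*]Crect rmorphD rmorphM /= conjCi !conj_Creal ?Creal_Re ?Creal_Im //.
by rewrite mulNr.
Qed.

Lemma zeta_rect (m : nat) : zeta m = 'Re (zeta m) + I * 'Im (zeta m).
Proof. exact: Crect. Qed.

Lemma Im_zeta_neq0 m : (1 < m)%N -> 'Im (zeta m) != 0.
Proof.
move=> h; apply/negP => /eqP /Creal_ImP r.
have h0 : (0 < m)%N by apply: ltnW.
have : ~~ (zeta m < 0) by rewrite /zeta rootC_lt0.
rewrite real_ltNge ?rpred0 // negbK => ge0.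
have := exprn_ge0 m ge0; rewrite zeta_m // oppr_ge0.
by rewrite ler10.
Qed.


Lemma tW_z m1 m2 : (0 < m1)%N -> (0 < m2)%N -> in_tW m1 m2 zS.
Proof.
move=> h1 h2.
have ha : in_tW m1 m2 (gammaS (alpha m1 (2 * m1))).
  by apply: tW_alpha; rewrite leqnn andbT muln_gt0.
have hb : in_tW m1 m2 (gammaS (beta m2 (2 * m2))).
  by apply: tW_beta; rewrite leqnn andbT muln_gt0.
rewrite alpha_2m // gammaS_vec4 in ha; rewrite beta_2m // gammaS_vec4 in hb.
have := tW_mul (tW_mul ha hb) (tW_mul ha hb).
suff -> : (G 0 (-1) 0 0 *m G 0 0 0 (-1)) *m (G 0 (-1) 0 0 *m G 0 0 0 (-1)) = zS by [].
rewrite /G /zS /I sc4 opp4 !mul4. (apply: eq4; ring: hi).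
Qed.

Definition Pm : 'M[algC]_4 := mx4 [:: [:: 1;0;0;0];[::0;I;0;0];[::0;0;I;0];[::0;0;0;-1]].
Definition Qm : 'M[algC]_4 := mx4 [:: [:: 1;0;0;0];[::0;-I;0;0];[::0;0;-I;0];[::0;0;0;-1]].

Lemma iso m1 m2 : (0 < m1)%N -> (0 < m2)%N -> iso_U11 m1 m2.
Proof.
move=> h1 h2; exists Pm; split.
  suff : Pm *m Qm = 1%:M by case/mulmx1_unit.
  by rewrite /Pm /Qm /I sc4 !mul4; apply: eq4; ring: hi.
rewrite /f1S /f2S /r1S /r2S /Ur1 /Ur2 alpha_m // beta_m // alpha_1 beta_1 !gammaS_vec4.
rewrite /= !zeta_inv //.
move: (zeta_rect m1) (zeta_rect m2).
move: ('Re (zeta m1)) ('Im (zeta m1)) ('Re (zeta m2)) ('Im (zeta m2)) => c1 s1 c2 s2 -> ->.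
rewrite /Pm /G /Uf1 /Uf2 /zS /Uz /I.
rewrite sc4 opp4 !mul4. split; [|split; [|split; [|split]]]; apply: eq4; ring: hi.
Qed.

Ltac lit := rewrite /G /I; repeat progress rewrite ?sc4 ?opp4 ?tr4 ?scl4 ?add4 ?mul4; apply: eq4; ring: hi.

Lemma dlit (k l : 'I_4) : delta_mx k l = mx4 [:: [:: ((k == 0 :> nat) && (l == 0 :> nat))%:R; ((k == 0 :> nat) && (l == 1 :> nat))%:R; ((k == 0 :> nat) && (l == 2 :> nat))%:R; ((k == 0 :> nat) && (l == 3 :> nat))%:R]; [:: ((k == 1 :> nat) && (l == 0 :> nat))%:R; ((k == 1 :> nat) && (l == 1 :> nat))%:R; ((k == 1 :> nat) && (l == 2 :> nat))%:R; ((k == 1 :> nat) && (l == 3 :> nat))%:R]; [:: ((k == 2 :> nat) && (l == 0 :> nat))%:R; ((k == 2 :> nat) && (l == 1 :> nat))%:R; ((k == 2 :> nat) && (l == 2 :> nat))%:R; ((k == 2 :> nat) && (l == 3 :> nat))%:R]; [:: ((k == 3 :> nat) && (l == 0 :> nat))%:R; ((k == 3 :> nat) && (l == 1 :> nat))%:R; ((k == 3 :> nat) && (l == 2 :> nat))%:R; ((k == 3 :> nat) && (l == 3 :> nat))%:R]] :> 'M[algC]_4.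
Proof. apply/matrixP => [[[|[|[|[|?]]]] ?] [[|[|[|[|?]]]] ?]] //; by rewrite !mxE /= ![Ordinal _ == _]eq_sym. Qed.

Lemma fin (U : 'M[algC]_4) (AE : forall k l : 'I_4, (U *m delta_mx k l <= U)%MS) :
  \rank U = 0%N \/ \rank U = 4%N.
Proof.
pose A (M : 'M[algC]_4) := (U *m M <= U)%MS.
have AZ : forall c M, A M -> A (c *: M).
  by move=> c M; rewrite /A -scalemxAr; apply: scalemx_sub.
case: (eqVneq U 0) => [->|nz]; first by left; rewrite mxrank0.
right; have /matrix0Pn [i [k nzik]] := nz.
apply/eqP; rewrite eqn_leq rank_leq_col /=; rewrite -{1}(mxrank1 algC 4); apply: mxrankS.
apply/row_subP => l.
have hA := AZ ((U i k)^-1) _ (AE k l).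
apply: submx_trans hA; rewrite row1.
suff -> : 'e_l = row i (U *m ((U i k)^-1 *: delta_mx k l)) by apply: row_sub.
apply/rowP => j; rewrite !mxE (bigD1 k) //= big1 ?addr0.
  rewrite !mxE eqxx /= mulrA mulfV // mul1r.
  by case: (j == l).
by move=> x /negbTE xk; rewrite !mxE xk /= !mulr0.
Qed.

Lemma irr m1 m2 : (1 < m1)%N -> (1 < m2)%N -> irreducible_on_S m1 m2.
Proof.
move=> h1 h2 U hU.
have h1' : (0 < m1)%N by apply: ltnW.
have h2' : (0 < m2)%N by apply: ltnW.
pose A (M : 'M[algC]_4) := (U *m M <= U)%MS.
have A1 : A 1%:M by rewrite /A mulmx1 submx_refl.
have AD : forall M N, A M -> A N -> A (M + N).
  by move=> M N; rewrite /A mulmxDr; apply: addmx_sub.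
have AZ : forall c M, A M -> A (c *: M).
  by move=> c M; rewrite /A -scalemxAr; apply: scalemx_sub.
have AM : forall M N, A M -> A N -> A (M *m N).
  by move=> M N; rewrite /A mulmxA => hM hN; apply: submx_trans (submxMr N hM) hN.
have Ag : forall g, in_tW m1 m2 g -> A g^T by [].
have zW := tW_z h1' h2'.
have f1W : in_tW m1 m2 (G 0 1 0 0).
  by have := @tW_alpha m1 m2 m1; rewrite alpha_m // gammaS_vec4; apply; rewrite h1' /= leq_pmull.
have f2W : in_tW m1 m2 (G 0 0 0 1).
  by have := @tW_beta m1 m2 m2; rewrite beta_m // gammaS_vec4; apply; rewrite h2' /= leq_pmull.
have a1W : in_tW m1 m2 (gammaS (alpha m1 1)).
  by apply: tW_alpha; rewrite /= muln_gt0.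
have b1W : in_tW m1 m2 (gammaS (beta m2 1)).
  by apply: tW_beta; rewrite /= muln_gt0.
rewrite alpha_1 gammaS_vec4 in a1W; rewrite beta_1 gammaS_vec4 in b1W.
have r1W := tW_mul (tW_mul zW f1W) a1W.
have r2W := tW_mul (tW_mul zW f2W) b1W.
have s1nz := Im_zeta_neq0 h1; have s2nz := Im_zeta_neq0 h2.
move: r1W r2W s1nz s2nz.
move: ('Re (zeta m1)) ('Im (zeta m1)) ('Re (zeta m2)) ('Im (zeta m2)) => c1 s1 c2 s2 r1W r2W s1nz s2nz.
have Is1 : I * s1 != 0 by rewrite mulf_neq0 ?neq0Ci.
have Is2 : I * s2 != 0 by rewrite mulf_neq0 ?neq0Ci.
have AD1 : A (mx4 [:: [:: 1; 0; 0; 0]; [:: 0; -1; 0; 0]; [:: 0; 0; 1; 0]; [:: 0; 0; 0; -1]]).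
  have -> : (mx4 [:: [:: 1; 0; 0; 0]; [:: 0; -1; 0; 0]; [:: 0; 0; 1; 0]; [:: 0; 0; 0; -1]]) = (I * s1)^-1 *: ((zS *m G 0 1 0 0 *m G s1 (- c1) 0 0)^T + (- c1) *: 1%:M).
    apply/(canRL (scalerK Is1)); rewrite /zS; lit.
  by apply: (AZ); apply: (AD); [apply: (Ag) | apply: (AZ)].
have AD2 : A (mx4 [:: [:: 1; 0; 0; 0]; [:: 0; 1; 0; 0]; [:: 0; 0; -1; 0]; [:: 0; 0; 0; -1]]).
  have -> : (mx4 [:: [:: 1; 0; 0; 0]; [:: 0; 1; 0; 0]; [:: 0; 0; -1; 0]; [:: 0; 0; 0; -1]]) = (I * s2)^-1 *: ((zS *m G 0 0 0 1 *m G 0 0 s2 (- c2))^T + (- c2) *: 1%:M).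
    apply/(canRL (scalerK Is2)); rewrite /zS; lit.
  by apply: (AZ); apply: (AD); [apply: (Ag) | apply: (AZ)].
have AT1 : A (G 0 1 0 0)^T by apply: (Ag).
have AT2 : A (G 0 0 0 1)^T by apply: (Ag).
have A00 : A (mx4 [:: [:: 1; 0; 0; 0]; [:: 0; 0; 0; 0]; [:: 0; 0; 0; 0]; [:: 0; 0; 0; 0]]).
  have -> : (mx4 [:: [:: 1; 0; 0; 0]; [:: 0; 0; 0; 0]; [:: 0; 0; 0; 0]; [:: 0; 0; 0; 0]]) = (4%:R)^-1 *: ((1%:M + (mx4 [:: [:: 1; 0; 0; 0]; [:: 0; -1; 0; 0]; [:: 0; 0; 1; 0]; [:: 0; 0; 0; -1]])) *m (1%:M + (mx4 [:: [:: 1; 0; 0; 0]; [:: 0; 1; 0; 0]; [:: 0; 0; -1; 0]; [:: 0; 0; 0; -1]]))).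
    apply/(canRL (scalerK _)); first by rewrite pnatr_eq0.
    lit.
  by apply: (AZ); apply: (AM); apply: (AD).
have A01 : A (mx4 [:: [:: 0; 1; 0; 0]; [:: 0; 0; 0; 0]; [:: 0; 0; 0; 0]; [:: 0; 0; 0; 0]]).
  have -> : (mx4 [:: [:: 0; 1; 0; 0]; [:: 0; 0; 0; 0]; [:: 0; 0; 0; 0]; [:: 0; 0; 0; 0]]) = (- I) *: ((mx4 [:: [:: 1; 0; 0; 0]; [:: 0; 0; 0; 0]; [:: 0; 0; 0; 0]; [:: 0; 0; 0; 0]]) *m (G 0 1 0 0)^T) by lit.
  by apply: (AZ); apply: (AM).
have A02 : A (mx4 [:: [:: 0; 0; 1; 0]; [:: 0; 0; 0; 0]; [:: 0; 0; 0; 0]; [:: 0; 0; 0; 0]]).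
  have -> : (mx4 [:: [:: 0; 0; 1; 0]; [:: 0; 0; 0; 0]; [:: 0; 0; 0; 0]; [:: 0; 0; 0; 0]]) = (- I) *: ((mx4 [:: [:: 1; 0; 0; 0]; [:: 0; 0; 0; 0]; [:: 0; 0; 0; 0]; [:: 0; 0; 0; 0]]) *m (G 0 0 0 1)^T) by lit.
  by apply: (AZ); apply: (AM).
have A03 : A (mx4 [:: [:: 0; 0; 0; 1]; [:: 0; 0; 0; 0]; [:: 0; 0; 0; 0]; [:: 0; 0; 0; 0]]).
  have -> : (mx4 [:: [:: 0; 0; 0; 1]; [:: 0; 0; 0; 0]; [:: 0; 0; 0; 0]; [:: 0; 0; 0; 0]]) = I *: ((mx4 [:: [:: 0; 1; 0; 0]; [:: 0; 0; 0; 0]; [:: 0; 0; 0; 0]; [:: 0; 0; 0; 0]]) *m (G 0 0 0 1)^T) by lit.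
  by apply: (AZ); apply: (AM).
have A10 : A (mx4 [:: [:: 0; 0; 0; 0]; [:: 1; 0; 0; 0]; [:: 0; 0; 0; 0]; [:: 0; 0; 0; 0]]).
  have -> : (mx4 [:: [:: 0; 0; 0; 0]; [:: 1; 0; 0; 0]; [:: 0; 0; 0; 0]; [:: 0; 0; 0; 0]]) = I *: ((G 0 1 0 0)^T *m (mx4 [:: [:: 1; 0; 0; 0]; [:: 0; 0; 0; 0]; [:: 0; 0; 0; 0]; [:: 0; 0; 0; 0]])) by lit.
  by apply: (AZ); apply: (AM).
have A20 : A (mx4 [:: [:: 0; 0; 0; 0]; [:: 0; 0; 0; 0]; [:: 1; 0; 0; 0]; [:: 0; 0; 0; 0]]).
  have -> : (mx4 [:: [:: 0; 0; 0; 0]; [:: 0; 0; 0; 0]; [:: 1; 0; 0; 0]; [:: 0; 0; 0; 0]]) = I *: ((G 0 0 0 1)^T *m (mx4 [:: [:: 1; 0; 0; 0]; [:: 0; 0; 0; 0]; [:: 0; 0; 0; 0]; [:: 0; 0; 0; 0]])) by lit.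
  by apply: (AZ); apply: (AM).
have A30 : A (mx4 [:: [:: 0; 0; 0; 0]; [:: 0; 0; 0; 0]; [:: 0; 0; 0; 0]; [:: 1; 0; 0; 0]]).
  have -> : (mx4 [:: [:: 0; 0; 0; 0]; [:: 0; 0; 0; 0]; [:: 0; 0; 0; 0]; [:: 1; 0; 0; 0]]) = (- I) *: ((G 0 0 0 1)^T *m (mx4 [:: [:: 0; 0; 0; 0]; [:: 1; 0; 0; 0]; [:: 0; 0; 0; 0]; [:: 0; 0; 0; 0]])) by lit.
  by apply: (AZ); apply: (AM).
have AE : forall k l : 'I_4, A (delta_mx k l).
  move=> k l; rewrite -(mul_delta_mx (0 : 'I_4)); apply: (AM).
    by case: k => [[|[|[|[|?]]]] ?] //; rewrite dlit.
  by case: l => [[|[|[|[|?]]]] ?] //; rewrite dlit.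
exact: fin AE.
Qed.

Theorem proposition2p2 (m1 m2 : nat) (hm1 : (2 <= m1)%N) (hm2 : (2 <= m2)%N) :
  clifford_relations /\ spin_on_S m1 m2 /\ irreducible_on_S m1 m2 /\ iso_U11 m1 m2.
Proof.
have h1 : (0 < m1)%N by apply: leq_trans hm1.
have h2 : (0 < m2)%N by apply: leq_trans hm2.
split; first exact: cliff.
split; first by split; [exact: tW_z | by []].
split; first exact: irr.
exact: iso.
Qed.
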